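(* Let $(A,\mu,\alpha,\beta)$ be a BiHom-associative algebra and let $r=\sum_i x_i\otimes y_i\in A\otimes A$ be such that $(\alpha\otimes\alpha)(r)=r=(\beta\otimes\beta)(r)$. Define $\Delta_r:A\rightarrow A\otimes A$ by $\Delta_r(a)=\sum_i\alpha(x_i)\otimes y_i\cdot a-\sum_i a\cdot x_i\otimes\beta(y_i)$. Then $(\Delta_r\otimes\beta)\circ\Delta_r=(\alpha\otimes\Delta_r)\circ\Delta_r$ if and only if $a\bullet A(r)=A(r)\bullet a$ for all $a\in A$, where the actions of $A$ on $A\otimes A\otimes A$ are $a\bullet(x\otimes y\otimes z)=\alpha(a)\cdot x\otimes\beta(y)\otimes\beta(z)$ and $(x\otimes y\otimes z)\bullet a=\alpha(x)\otimes\alpha(y)\otimes z\cdot\beta(a)$, and $A(r)=r_{13}r_{12}-r_{12}r_{23}+r_{23}r_{13}$ with $r_{12}r_{23}=\sum_{i,j}\alpha(x_i)\otimes y_i\cdot x_j\otimes\beta(y_j)$, $r_{13}r_{12}=\sum_{i,j}x_i\cdot x_j\otimes\beta(y_j)\otimes\beta(y_i)$, $r_{23}r_{13}=\sum_{i,j}\alpha(x_i)\otimes\alpha(x_j)\otimes y_j\cdot y_i$.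
   Context: A BiHom-associative algebra is a 4-tuple $(A,\mu,\alpha,\beta)$ with $A$ a linear space, $\alpha,\beta:A\to A$ and $\mu:A\otimes A\to A$ (written $\mu(x\otimes y)=x\cdot y$) linear maps such that $\alpha\circ\beta=\beta\circ\alpha$, $\alpha(x\cdot y)=\alpha(x)\cdot\alpha(y)$, $\beta(x\cdot y)=\beta(x)\cdot\beta(y)$ and $\alpha(x)\cdot(y\cdot z)=(x\cdot y)\cdot\beta(z)$ for all $x,y,z\in A$. Work is over a base field $\Bbbk$, and $\otimes=\otimes_{\Bbbk}$. *)

(* Defs.v *)
From HB Require Import structures.
From mathcomp Require Import all_boot all_order all_algebra.
Set Implicit Arguments.
Unset Strict Implicit.
Unset Printing Implicit Defensive.
Import GRing.Theory.
Local Open Scope ring_scope.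

(* Elements of A (x) A and A (x) A (x) A are represented as finite formal sums of
   pure tensors, i.e. lists  seq (A * A)  /  seq (A * A * A)  (scalars are absorbed
   into the first factor, every tensor is such a finite sum).
   Two such formal sums denote the same tensor iff they agree under every
   f (x) g (x) h with f, g, h linear functionals A -> K  (over a field the
   canonical map A(x)A(x)A -> (A^* (x) A^* (x) A^* )^* is injective). *)

Section BiHom.
Variables (K : fieldType) (A : lmodType K).

Definition lin_map (f : A -> A) : Prop :=
  forall (c : K) (u v : A), f (c *: u + v) = c *: f u + f v.

Definition lin_functional (f : A -> K) : Prop :=
  forall (c : K) (u v : A), f (c *: u + v) = c * f u + f v.

Definition bilin_map (mu : A -> A -> A) : Prop :=
  (forall (c : K) (u v w : A), mu (c *: u + v) w = c *: mu u w + mu v w) /\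
  (forall (c : K) (u v w : A), mu w (c *: u + v) = c *: mu w u + mu w v).

Record BiHomAssoc (mu : A -> A -> A) (alpha beta : A -> A) : Prop := {
  bh_mu_lin : bilin_map mu;
  bh_alpha_lin : lin_map alpha;
  bh_beta_lin : lin_map beta;
  bh_comm : forall x, alpha (beta x) = beta (alpha x);
  bh_alpha_mult : forall x y, alpha (mu x y) = mu (alpha x) (alpha y);
  bh_beta_mult : forall x y, beta (mu x y) = mu (beta x) (beta y);
  bh_assoc : forall x y z, mu (alpha x) (mu y z) = mu (mu x y) (beta z)
}.

Definition tensor2 := seq (A * A).
Definition tensor3 := seq (A * A * A).

Definition ev2 (f g : A -> K) (t : tensor2) : K :=
  \sum_(p <- t) f p.1 * g p.2.
Definition ev3 (f g h : A -> K) (t : tensor3) : K :=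
  \sum_(p <- t) f p.1.1 * g p.1.2 * h p.2.

Definition teq2 (t s : tensor2) : Prop :=
  forall f g, lin_functional f -> lin_functional g -> ev2 f g t = ev2 f g s.
Definition teq3 (t s : tensor3) : Prop :=
  forall f g h, lin_functional f -> lin_functional g -> lin_functional h ->
    ev3 f g h t = ev3 f g h s.

Definition tmap2 (f g : A -> A) (t : tensor2) : tensor2 :=
  [seq (f p.1, g p.2) | p <- t].

Definition tneg3 (t : tensor3) : tensor3 :=
  [seq (- p.1.1, p.1.2, p.2) | p <- t].
Definition tsub3 (t s : tensor3) : tensor3 := t ++ tneg3 s.

Variables (mu : A -> A -> A) (alpha beta : A -> A).

Definition Delta_r (r : tensor2) (a : A) : tensor2 :=
  [seq (alpha p.1, mu p.2 a) | p <- r] ++ [seq (- mu a p.1, beta p.2) | p <- r].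

Definition Delta_ot_beta (r : tensor2) (t : tensor2) : tensor3 :=
  flatten [seq [seq (q.1, q.2, beta p.2) | q <- Delta_r r p.1] | p <- t].
Definition alpha_ot_Delta (r : tensor2) (t : tensor2) : tensor3 :=
  flatten [seq [seq (alpha p.1, q.1, q.2) | q <- Delta_r r p.2] | p <- t].

Definition r12r23 (r : tensor2) : tensor3 :=
  [seq (alpha p.1, mu p.2 q.1, beta q.2) | p <- r, q <- r].
Definition r13r12 (r : tensor2) : tensor3 :=
  [seq (mu p.1 q.1, beta q.2, beta p.2) | p <- r, q <- r].
Definition r23r13 (r : tensor2) : tensor3 :=
  [seq (alpha p.1, alpha q.1, mu q.2 p.2) | p <- r, q <- r].

Definition Ar (r : tensor2) : tensor3 :=
  tsub3 (r13r12 r) (r12r23 r) ++ r23r13 r.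

Definition actL (a : A) (t : tensor3) : tensor3 :=
  [seq (mu (alpha a) p.1.1, beta p.1.2, beta p.2) | p <- t].
Definition actR (t : tensor3) (a : A) : tensor3 :=
  [seq (alpha p.1.1, alpha p.1.2, mu p.2 (beta a)) | p <- t].

End BiHom.

(* Main.v *)
Require Import Defs.
From HB Require Import structures.
From mathcomp Require Import all_boot all_order all_algebra.
From mathcomp Require Import ring.
Import GRing.Theory.
Set Implicit Arguments.
Unset Strict Implicit.
Local Open Scope ring_scope.

Section Lin.
Variables (K : fieldType) (A : lmodType K).
Implicit Types (m : A -> A) (phi : A -> K).

Lemma lin0 m : lin_map m -> m 0 = 0.
Proof.
move=> Hm; have := Hm 1 0 0.
rewrite scaler0 addr0 scale1r -{1}(addr0 (m 0)) => /addrI; done.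
Qed.
Lemma linN m u : lin_map m -> m (- u) = - m u.
Proof.
move=> Hm; have := Hm (-1) u 0; rewrite addr0 (lin0 Hm) addr0 !scaleN1r; done.
Qed.
Lemma lf0 phi : lin_functional phi -> phi 0 = 0.
Proof.
move=> Hm; have := Hm 1 0 0.
rewrite scaler0 addr0 mul1r -{1}(addr0 (phi 0)) => /addrI; done.
Qed.
Lemma lfN phi u : lin_functional phi -> phi (- u) = - phi u.
Proof.
move=> Hm; have := Hm (-1) u 0; rewrite addr0 (lf0 Hm) addr0 scaleN1r mulN1r; done.
Qed.
Lemma lf_comp phi m : lin_functional phi -> lin_map m -> lin_functional (fun u => phi (m u)).
Proof. by move=> Hp Hm c u v; rewrite Hm Hp. Qed.
Lemma lin_comp m1 m2 : lin_map m1 -> lin_map m2 -> lin_map (fun u => m1 (m2 u)).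
Proof. by move=> H1 H2 c u v; rewrite H2 H1. Qed.
Lemma lf_mulr phi c : lin_functional phi -> lin_functional (fun u => phi u * c).
Proof. by move=> Hp c' u v; rewrite Hp; ring. Qed.
Lemma lf_mull phi c : lin_functional phi -> lin_functional (fun u => c * phi u).
Proof. by move=> Hp c' u v; rewrite Hp; ring. Qed.
Lemma lf_sum (T : Type) (s : seq T) (F : T -> A -> K) :
  (forall q, lin_functional (F q)) -> lin_functional (fun u => \sum_(q <- s) F q u).
Proof.
move=> HF c u v; rewrite mulr_sumr -big_split /=; apply: eq_bigr => q _; exact: HF.
Qed.

Variable r : tensor2 A.
Lemma sub_lemma m (Hm : teq2 (tmap2 m m r) r) phi psi (F G : A * A -> K) :
  lin_functional phi -> lin_functional psi ->
  (forall q, F q = phi q.1 * psi q.2) -> (forall q, G q = phi (m q.1) * psi (m q.2)) ->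
  \sum_(q <- r) F q = \sum_(q <- r) G q.
Proof.
move=> Hp Hq HF HG.
have := Hm phi psi Hp Hq; rewrite /ev2 big_map /= => E.
rewrite (eq_bigr _ (fun q _ => HF q)) (eq_bigr _ (fun q _ => HG q)); done.
Qed.
End Lin.

Section Main.
Variables (K : fieldType) (A : lmodType K) (mu : A -> A -> A) (alpha beta : A -> A) (r : tensor2 A).
Hypothesis H : BiHomAssoc mu alpha beta.
Hypothesis Ha : teq2 (tmap2 alpha alpha r) r.
Hypothesis Hb : teq2 (tmap2 beta beta r) r.
Variables (f g h : A -> K).
Hypotheses (Hf : lin_functional f) (Hg : lin_functional g) (Hh : lin_functional h).
Variable a : A.

Let La : lin_map alpha := bh_alpha_lin H.
Let Lb : lin_map beta := bh_beta_lin H.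
Let LmuL w : lin_map (fun u => mu w u).
Proof. by move=> c u v; rewrite (proj2 (bh_mu_lin H)). Qed.
Let LmuR w : lin_map (fun u => mu u w).
Proof. by move=> c u v; rewrite (proj1 (bh_mu_lin H)). Qed.
Let muNr w u : mu w (- u) = - mu w u.
Proof. exact: (linN u (LmuL w)). Qed.
Let muNl w u : mu (- u) w = - mu u w.
Proof. exact: (linN u (LmuR w)). Qed.
Let aN u : alpha (- u) = - alpha u. Proof. exact: linN. Qed.
Let fN u : f (- u) = - f u. Proof. exact: lfN. Qed.
Let gN u : g (- u) = - g u. Proof. exact: lfN. Qed.
Let hN u : h (- u) = - h u. Proof. exact: lfN. Qed.
Let asc := bh_assoc H.
Let am := bh_alpha_mult H.
Let bm := bh_beta_mult H.
Let cm := bh_comm H.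

Lemma A4L1 : \sum_(i <- r) \sum_(j <- r)
         f (- mu (- mu a i.1) j.1) * g (beta j.2) * h (beta (beta i.2)) =
  \sum_(i1 <- r) \sum_(i2 <- r)
        f (mu (alpha a) (mu i1.1 i2.1)) * g (beta (beta i2.2)) * h (beta (beta i1.2)).
Proof.
apply: eq_bigr => i _; rewrite -!mulr_suml; congr (_ * _).
apply: (sub_lemma Hb (phi := fun u => f (mu (mu a i.1) u)) (psi := fun v => g (beta v))).
- exact: lf_comp.
- exact: lf_comp.
- by move=> q /=; rewrite muNl !opprK.
- by move=> q /=; rewrite asc.
Qed.

Lemma B4L2 : \sum_(i <- r) \sum_(j <- r)
         f (alpha (- mu a i.1)) * g (- mu (beta i.2) j.1) * h (beta j.2) =
  - \sum_(i1 <- r) \sum_(i2 <- r)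
        f (mu (alpha a) (- alpha i1.1)) * g (beta (mu i1.2 i2.1)) * h (beta (beta i2.2)).
Proof.
rewrite -sumrN; apply: eq_bigr => i _; rewrite -sumrN.
apply: (sub_lemma Hb (phi := fun u => f (alpha (mu a i.1)) * g (mu (beta i.2) u)) (psi := fun v => h (beta v))).
- by apply: lf_mull; exact: lf_comp.
- exact: lf_comp.
- by move=> q /=; rewrite aN fN gN; ring.
- by move=> q /=; rewrite muNr fN am bm; ring.
Qed.
Lemma B3L3 : \sum_(i <- r) \sum_(j <- r)
         f (alpha (- mu a i.1)) * g (alpha j.1) * h (mu j.2 (beta i.2)) =
  - \sum_(i1 <- r) \sum_(i2 <- r)
        f (mu (alpha a) (alpha i1.1)) * g (beta (alpha i2.1)) * h (beta (mu i2.2 i1.2)).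
Proof.
rewrite -sumrN; apply: eq_bigr => i _; rewrite -sumrN.
apply: (sub_lemma Hb (phi := fun u => - f (alpha (mu a i.1)) * g (alpha u)) (psi := fun v => h (mu v (beta i.2)))).
- by apply: lf_mull; exact: lf_comp.
- exact: lf_comp.
- by move=> q /=; rewrite aN fN; ring.
- by move=> q /=; rewrite am cm bm; ring.
Qed.

Lemma A2R1 : \sum_(i <- r) \sum_(j <- r)
        f (- mu (alpha i.1) j.1) * g (beta j.2) * h (beta (mu i.2 a)) =
  - \sum_(i1 <- r) \sum_(i2 <- r)
        f (alpha (mu i1.1 i2.1)) * g (alpha (beta i2.2)) * h (mu (beta i1.2) (beta a)).
Proof.
rewrite -sumrN; apply: eq_bigr => i _; rewrite -sumrN.
apply: (sub_lemma Ha (phi := fun u => f (mu (alpha i.1) u)) (psi := fun v => g (beta v) * - h (beta (mu i.2 a)))).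
- exact: lf_comp.
- by apply: lf_mulr; exact: lf_comp.
- by move=> q /=; rewrite fN; ring.
- by move=> q /=; rewrite am cm bm; ring.
Qed.

Lemma B1R3 : \sum_(i <- r) \sum_(j <- r)
        f (alpha (alpha i.1)) * g (alpha j.1) * h (mu j.2 (mu i.2 a)) =
  \sum_(i1 <- r) \sum_(i2 <- r)
        f (alpha (alpha i1.1)) * g (alpha (alpha i2.1)) * h (mu (mu i2.2 i1.2) (beta a)).
Proof.
apply: eq_bigr => i _.
apply: (sub_lemma Ha (phi := fun u => f (alpha (alpha i.1)) * g (alpha u)) (psi := fun v => h (mu v (mu i.2 a)))).
- by apply: lf_mull; exact: lf_comp.
- exact: lf_comp.
- by move=> q /=.
- by move=> q /=; rewrite asc.
Qed.

Lemma A3B2 : \sum_(i <- r) \sum_(j <- r)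
         f (alpha j.1) * g (mu j.2 (- mu a i.1)) * h (beta (beta i.2)) =
  \sum_(i <- r) \sum_(j <- r)
        f (alpha (alpha i.1)) * g (- mu (mu i.2 a) j.1) * h (beta j.2).
Proof.
rewrite exchange_big /= .
apply: (sub_lemma Ha (phi := fun u => f (alpha u))
   (psi := fun v => \sum_(q <- r) g (mu v (- mu a q.1)) * h (beta (beta q.2)))).
- exact: lf_comp.
- by apply: lf_sum => q; apply: lf_mulr; exact: lf_comp.
- by move=> p /=; rewrite big_distrr /=; apply: eq_bigr => q _; ring.
- move=> p /=; rewrite big_distrr /=.
  apply: (sub_lemma Hb (phi := fun u => - f (alpha (alpha p.1)) * g (mu (mu p.2 a) u))
            (psi := fun v => h (beta v))).
  + by apply: lf_mull; exact: lf_comp.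
  + exact: lf_comp.
  + by move=> q /=; rewrite gN; ring.
  + by move=> q /=; rewrite -asc muNr gN; ring.
Qed.

Lemma A1R2 : \sum_(i <- r) \sum_(j <- r)
        f (alpha j.1) * g (mu j.2 (alpha i.1)) * h (beta (mu i.2 a)) =
  - \sum_(i1 <- r) \sum_(i2 <- r)
        f (alpha (- alpha i1.1)) * g (alpha (mu i1.2 i2.1)) * h (mu (beta i2.2) (beta a)).
Proof.
rewrite exchange_big /= -sumrN.
apply: (sub_lemma Ha (phi := fun u => f (alpha u))
   (psi := fun v => \sum_(q <- r) g (mu v (alpha q.1)) * h (beta (mu q.2 a)))).
- exact: lf_comp.
- by apply: lf_sum => q; apply: lf_mulr; exact: lf_comp.
- by move=> p /=; rewrite big_distrr /=; apply: eq_bigr => q _; ring.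
- move=> p /=; rewrite -sumrN big_distrr /=; apply: eq_bigr => q _.
  by rewrite aN fN am bm; ring.
Qed.
Lemma expL : ev3 f g h (Delta_ot_beta mu alpha beta r (Delta_r mu alpha beta r a)) =
  \sum_(i <- r)
     \sum_(j <- r)
        f (alpha j.1) * g (mu j.2 (alpha i.1)) * h (beta (mu i.2 a)) +
  \sum_(i <- r)
     \sum_(j <- r)
        f (- mu (alpha i.1) j.1) * g (beta j.2) * h (beta (mu i.2 a)) +
  (\sum_(i <- r)
      \sum_(j <- r)
         f (alpha j.1) * g (mu j.2 (- mu a i.1)) * h (beta (beta i.2)) +
   \sum_(i <- r)
      \sum_(j <- r)
         f (- mu (- mu a i.1) j.1) * g (beta j.2) * h (beta (beta i.2))).
Proof.
rewrite /ev3 /Delta_ot_beta big_flatten /= big_map {1}/Delta_r big_cat /= !big_map.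
under eq_bigr => p _ do rewrite big_map big_cat /= !big_map.
under [X in _ + X]eq_bigr => p _ do rewrite big_map big_cat /= !big_map.
by rewrite !big_split /=.
Qed.

Lemma expR : ev3 f g h (alpha_ot_Delta mu alpha beta r (Delta_r mu alpha beta r a)) =
  \sum_(i <- r)
     \sum_(j <- r)
        f (alpha (alpha i.1)) * g (alpha j.1) * h (mu j.2 (mu i.2 a)) +
  \sum_(i <- r)
     \sum_(j <- r)
        f (alpha (alpha i.1)) * g (- mu (mu i.2 a) j.1) * h (beta j.2) +
  (\sum_(i <- r)
      \sum_(j <- r)
         f (alpha (- mu a i.1)) * g (alpha j.1) * h (mu j.2 (beta i.2)) +
   \sum_(i <- r)
      \sum_(j <- r)
         f (alpha (- mu a i.1)) * g (- mu (beta i.2) j.1) * h (beta j.2)).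
Proof.
rewrite /ev3 /alpha_ot_Delta big_flatten /= big_map {1}/Delta_r big_cat /= !big_map.
under eq_bigr => p _ do rewrite big_map big_cat /= !big_map.
under [X in _ + X]eq_bigr => p _ do rewrite big_map big_cat /= !big_map.
by rewrite !big_split /=.
Qed.

Lemma expAL : ev3 f g h (actL mu alpha beta a (Ar mu alpha beta r)) =
  \sum_(i1 <- r)
     \sum_(i2 <- r)
        f (mu (alpha a) (mu i1.1 i2.1)) * g (beta (beta i2.2)) *
        h (beta (beta i1.2)) +
  \sum_(i1 <- r)
     \sum_(i2 <- r)
        f (mu (alpha a) (- alpha i1.1)) * g (beta (mu i1.2 i2.1)) *
        h (beta (beta i2.2)) +
  \sum_(i1 <- r)
     \sum_(i2 <- r)
        f (mu (alpha a) (alpha i1.1)) * g (beta (alpha i2.1)) *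
        h (beta (mu i2.2 i1.2)).
Proof.
by rewrite /ev3 /actL /Ar /tsub3 /tneg3 /r13r12 /r12r23 /r23r13 !map_cat !big_cat /= !big_map !big_allpairs_dep /=.
Qed.

Lemma expAR : ev3 f g h (actR mu alpha beta (Ar mu alpha beta r) a) =
  \sum_(i1 <- r)
     \sum_(i2 <- r)
        f (alpha (mu i1.1 i2.1)) * g (alpha (beta i2.2)) *
        h (mu (beta i1.2) (beta a)) +
  \sum_(i1 <- r)
     \sum_(i2 <- r)
        f (alpha (- alpha i1.1)) * g (alpha (mu i1.2 i2.1)) *
        h (mu (beta i2.2) (beta a)) +
  \sum_(i1 <- r)
     \sum_(i2 <- r)
        f (alpha (alpha i1.1)) * g (alpha (alpha i2.1)) *
        h (mu (mu i2.2 i1.2) (beta a)).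
Proof.
by rewrite /ev3 /actR /Ar /tsub3 /tneg3 /r13r12 /r12r23 /r23r13 !map_cat !big_cat /= !big_map !big_allpairs_dep /=.
Qed.

Lemma key :
  ev3 f g h (Delta_ot_beta mu alpha beta r (Delta_r mu alpha beta r a)) -
  ev3 f g h (alpha_ot_Delta mu alpha beta r (Delta_r mu alpha beta r a)) =
  ev3 f g h (actL mu alpha beta a (Ar mu alpha beta r)) -
  ev3 f g h (actR mu alpha beta (Ar mu alpha beta r) a).
Proof.
rewrite expL expR expAL expAR A1R2 A2R1 A3B2 A4L1 B1R3 B3L3 B4L2.
ring.
Qed.
End Main.

Theorem proposition5p4 (K : fieldType) (A : lmodType K)
  (mu : A -> A -> A) (alpha beta : A -> A) (r : tensor2 A) :
  BiHomAssoc mu alpha beta ->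
  teq2 (tmap2 alpha alpha r) r ->
  teq2 (tmap2 beta beta r) r ->
  ((forall a : A, teq3 (Delta_ot_beta mu alpha beta r (Delta_r mu alpha beta r a))
                       (alpha_ot_Delta mu alpha beta r (Delta_r mu alpha beta r a)))
   <->
   (forall a : A, teq3 (actL mu alpha beta a (Ar mu alpha beta r))
                       (actR mu alpha beta (Ar mu alpha beta r) a))).
Proof.
move=> H Ha Hb; split=> E a f g h Hf Hg Hh; have := key H Ha Hb Hf Hg Hh a; move: (E a f g h Hf Hg Hh).
- by move=> ->; rewrite subrr => /esym/eqP; rewrite subr_eq0 => /eqP.
- by move=> ->; rewrite subrr => /eqP; rewrite subr_eq0 => /eqP.
Qed.
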